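(* Let $(M,\Sigma_M,\mu,T)$ be an ergodic measure-preserving deterministic system. Assume there do not exist $n\in\mathbb{N}$ and $C\in\Sigma_M$ with $0<\mu(C)<1$ such that $\mu\big(T^n(C)\,\triangle\, C\big)=0$. Let $\Phi:M\to M_O$ be any nontrivial finite-valued observation function, and let $Z_t:=\Phi\circ T^t$, $t\in\mathbb{Z}$. Then there is an observed value $o_i\in M_O$ such that for every $o_j\in M_O$ and every $t\in\mathbb{Z}$, $$P\{Z_{t+1}=o_j\mid Z_t=o_i\}:=\frac{\mu(\{m: \Phi(T^{t}m)=o_i,\ \Phi(T^{t+1}m)=o_j\})}{\mu(\{m:\Phi(T^t m)=o_i\})}<1.$$
   Context: A deterministic system is a quadruple $(M,\Sigma_M,\mu,T)$ where $(M,\Sigma_M,\mu)$ is a (complete) probability space and $T:M\to M$ is a bijection such that $T$ and $T^{-1}$ are measurable. It is measure-preserving if $\mu(T(A))=\mu(A)$ for all $A\in\Sigma_M$. It is ergodic if every $A\in\Sigma_M$ with $\mu(T(A)\triangle A)=0$ has $\mu(A)\in\{0,1\}$ (equivalently, $\lim_{n\to\infty}\frac1n\sum_{i=0}^{n-1}(\mu(T^i(A)\cap B)-\mu(A)\mu(B))=0$ for all $A,B\in\Sigma_M$). A partition of $(M,\Sigma_M,\mu)$ is a finite set $\alpha=\{\alpha_1,\dots,\alpha_n\}$ of pairwise disjoint sets $\alpha_i\in\Sigma_M$ with $\mu(\alpha_i)>0$ and $\bigcup_i\alpha_i=M$; it is nontrivial if $n\ge 2$. A finite-valued observation function is a map $\Phi=\sum_{i=1}^n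 o_i\chi_{\alpha_i}$ for some partition $\alpha$ and distinct values $o_1,\dots,o_n$, with $M_O=\{o_1,\dots,o_n\}$; it is nontrivial if its partition is nontrivial. *)

(* Defs.v *)
From Stdlib Require Import Reals ZArith.
Open Scope R_scope.

Definition set (M : Type) := M -> Prop.
Definition setT {M} : set M := fun _ => True.
Definition set0 {M} : set M := fun _ => False.
Definition setC {M} (A : set M) : set M := fun x => ~ A x.
Definition setI {M} (A B : set M) : set M := fun x => A x /\ B x.
Definition setD {M} (A B : set M) : set M := fun x => A x /\ ~ B x.
Definition setU {M} (A B : set M) : set M := fun x => A x \/ B x.
Definition symdiff {M} (A B : set M) : set M := setU (setD A B) (setD B A).
Definition bigcup {M} (A : nat -> set M) : set M := fun x => exists n, A n x.
Definition subset {M} (A B : set M) : Prop := forall x, A x -> B x.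
Definition image {M} (T : M -> M) (A : set M) : set M :=
  fun y => exists x, A x /\ T x = y.
Definition preimage {M} (T : M -> M) (A : set M) : set M := fun x => A (T x).

Definition is_sigma_algebra {M} (S : set M -> Prop) : Prop :=
  S setT /\
  (forall A, S A -> S (setC A)) /\
  (forall A : nat -> set M, (forall n, S (A n)) -> S (bigcup A)).

Definition is_probability_measure {M} (S : set M -> Prop) (mu : set M -> R) : Prop :=
  (forall A, S A -> 0 <= mu A) /\
  mu set0 = 0 /\
  mu setT = 1 /\
  (forall A : nat -> set M,
      (forall n, S (A n)) ->
      (forall n m, n <> m -> forall x, A n x -> A m x -> False) ->
      infinite_sum (fun n => mu (A n)) (mu (bigcup A))).

Definition is_complete {M} (S : set M -> Prop) (mu : set M -> R) : Prop :=
  forall A B, S B -> mu B = 0 -> subset A B -> S A.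

Definition probability_space {M} (S : set M -> Prop) (mu : set M -> R) : Prop :=
  is_sigma_algebra S /\ is_probability_measure S mu /\ is_complete S mu.

Definition bimeasurable_bijection {M} (S : set M -> Prop) (T Tinv : M -> M) : Prop :=
  (forall x, Tinv (T x) = x) /\ (forall y, T (Tinv y) = y) /\
  (forall A, S A -> S (preimage T A)) /\
  (forall A, S A -> S (preimage Tinv A)).

Definition measure_preserving {M} (S : set M -> Prop) (mu : set M -> R) (T : M -> M) : Prop :=
  forall A, S A -> mu (image T A) = mu A.

Definition ergodic {M} (S : set M -> Prop) (mu : set M -> R) (T : M -> M) : Prop :=
  forall A, S A -> mu (symdiff (image T A) A) = 0 -> mu A = 0 \/ mu A = 1.

Fixpoint iterT {M} (n : nat) (f : M -> M) (x : M) : M :=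
  match n with O => x | S k => f (iterT k f x) end.

Definition Tpow {M} (T Tinv : M -> M) (t : Z) : M -> M :=
  match t with
  | Z0 => fun x => x
  | Zpos p => iterT (Pos.to_nat p) T
  | Zneg p => iterT (Pos.to_nat p) Tinv
  end.

Definition nontrivial_finite_observation {M O : Type} (S : set M -> Prop)
  (mu : set M -> R) (Phi : M -> O) (n : nat) (o : nat -> O) : Prop :=
  (2 <= n)%nat /\
  (forall i j, (i < n)%nat -> (j < n)%nat -> o i = o j -> i = j) /\
  (forall m, exists i, (i < n)%nat /\ Phi m = o i) /\
  (forall i, (i < n)%nat -> S (fun m => Phi m = o i) /\ 0 < mu (fun m => Phi m = o i)).

Definition trans_prob {M O : Type} (mu : set M -> R) (T Tinv : M -> M)
  (Phi : M -> O) (t : Z) (oi oj : O) : R :=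
  mu (fun m => Phi (Tpow T Tinv t m) = oi /\ Phi (Tpow T Tinv (t + 1) m) = oj)
  / mu (fun m => Phi (Tpow T Tinv t m) = oi).

(* Main.v *)
Require Import Defs.
From Stdlib Require Import Reals ZArith.
From Stdlib Require Import Lra Lia Classical ClassicalEpsilon FunctionalExtensionality PropExtensionality.
Open Scope R_scope.

Lemma set_ext {M} (A B : set M) : (forall x, A x <-> B x) -> A = B.
Proof. intro H. apply functional_extensionality; intro x. apply propositional_extensionality. apply H. Qed.

Lemma S_set0 {M} (S : set M -> Prop) : is_sigma_algebra S -> S set0.
Proof. intros [HT [HC _]]. replace (@set0 M) with (setC (@setT M)). apply HC, HT.
  apply set_ext; unfold setC, setT, set0; tauto. Qed.

Definition seq2 {M} (A B : set M) (k : nat) : set M :=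
  match k with 0%nat => A | 1%nat => B | _ => set0 end.

Lemma bigcup_seq2 {M} (A B : set M) : bigcup (seq2 A B) = setU A B.
Proof. apply set_ext; intro x; unfold bigcup, setU; split.
  - intros [k Hk]. destruct k as [|[|k]]; simpl in Hk; unfold set0 in Hk; tauto.
  - intros [H|H]; [exists 0%nat | exists 1%nat]; exact H. Qed.

Lemma S_setU {M} (S : set M -> Prop) A B : is_sigma_algebra S -> S A -> S B -> S (setU A B).
Proof. intros Hs HA HB. rewrite <- bigcup_seq2. pose proof Hs as [_ [_ HU]].
  apply HU. intro k; destruct k as [|[|k]]; simpl; auto. apply S_set0; auto. Qed.

Lemma S_setC {M} (S : set M -> Prop) A : is_sigma_algebra S -> S A -> S (setC A).
Proof. intros [_ [HC _]] HA; auto. Qed.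

Lemma S_setI {M} (S : set M -> Prop) A B : is_sigma_algebra S -> S A -> S B -> S (setI A B).
Proof. intros Hs HA HB.
  replace (setI A B) with (setC (setU (setC A) (setC B))).
  - apply S_setC; auto. apply S_setU; auto; apply S_setC; auto.
  - apply set_ext; intro x; unfold setC, setU, setI.
    destruct (classic (A x)), (classic (B x)); tauto. Qed.

Lemma S_setD {M} (S : set M -> Prop) A B : is_sigma_algebra S -> S A -> S B -> S (setD A B).
Proof. intros Hs HA HB. change (S (setI A (setC B))). apply S_setI; auto. apply S_setC; auto. Qed.

Lemma mu_add2 {M} S (mu : set M -> R) A B : probability_space S mu -> S A -> S B ->
  (forall x, A x -> B x -> False) -> mu (setU A B) = mu A + mu B.
Proof.
  intros [Hs [[Hpos [H0 [H1 Hadd]]] _]] HA HB Hdis.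
  assert (Hm : forall k, S (seq2 A B k)).
  { intro k; destruct k as [|[|k]]; simpl; auto. apply S_set0; auto. }
  assert (Hd : forall n m, n <> m -> forall x, seq2 A B n x -> seq2 A B m x -> False).
  { intros n m Hnm x; destruct n as [|[|n]]; destruct m as [|[|m]]; simpl; unfold set0;
    intros Hn Hm'; first [contradiction | congruence | exact (Hdis x Hn Hm') | exact (Hdis x Hm' Hn)]. }
  assert (Hsum := Hadd (seq2 A B) Hm Hd). rewrite bigcup_seq2 in Hsum.
  assert (Hs2 : forall N, (1 <= N)%nat -> sum_f_R0 (fun k => mu (seq2 A B k)) N = mu A + mu B).
  { induction N; intro HN; [lia|]. destruct N. simpl. ring.
    replace (sum_f_R0 (fun k => mu (seq2 A B k)) (Datatypes.S (Datatypes.S N))) with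
      (sum_f_R0 (fun k => mu (seq2 A B k)) (Datatypes.S N) + mu set0) by reflexivity.
    rewrite IHN by lia. rewrite H0. ring. }
  assert (Hsum2 : infinite_sum (fun k => mu (seq2 A B k)) (mu A + mu B)).
  { intros eps Heps. exists 1%nat. intros N HN. unfold R_dist. rewrite Hs2 by lia.
    replace (mu A + mu B - (mu A + mu B)) with 0 by ring. rewrite Rabs_R0. lra. }
  eapply uniqueness_sum; eauto.
Qed.

Lemma mu_split {M} S (mu : set M -> R) A B : probability_space S mu -> S A -> S B ->
  mu A = mu (setI A B) + mu (setD A B).
Proof. intros Hps HA HB. pose proof Hps as [Hs _].
  transitivity (mu (setU (setI A B) (setD A B))).
  - f_equal. apply set_ext; intro x; unfold setU, setI, setD. destruct (classic (B x)); tauto.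
  - apply (mu_add2 S); auto. apply S_setI; auto. apply S_setD; auto.
    unfold setI, setD; tauto. Qed.

Lemma mu_pos {M} S (mu : set M -> R) A : probability_space S mu -> S A -> 0 <= mu A.
Proof. intros [_ [[Hpos _] _]]; auto. Qed.

Lemma mu_mono {M} S (mu : set M -> R) A B : probability_space S mu -> S A -> S B ->
  subset A B -> mu A <= mu B.
Proof. intros Hps HA HB Hsub. pose proof Hps as [Hs _].
  rewrite (mu_split S mu B A Hps HB HA).
  replace (setI B A) with A. pose proof (mu_pos S mu (setD B A) Hps (S_setD S B A Hs HB HA)). lra.
  apply set_ext; intro x; unfold setI; split; [intros; split; auto | tauto]. Qed.

Lemma null_union {M} S (mu : set M -> R) A B : probability_space S mu -> S A -> S B ->
  mu A = 0 -> mu B = 0 -> S (setU A B) /\ mu (setU A B) = 0.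
Proof. intros Hps HA HB HA0 HB0. pose proof Hps as [Hs _]. split. apply S_setU; auto.
  replace (setU A B) with (setU A (setD B A)).
  - rewrite (mu_add2 S); auto. 2: apply S_setD; auto. 2: unfold setD; tauto.
    pose proof (mu_mono S mu (setD B A) B Hps (S_setD S B A Hs HB HA) HB ltac:(intros x [? ?]; auto)).
    pose proof (mu_pos S mu (setD B A) Hps (S_setD S B A Hs HB HA)). lra.
  - apply set_ext; intro x; unfold setU, setD. destruct (classic (A x)); tauto. Qed.

Lemma null_subset {M} S (mu : set M -> R) A B : probability_space S mu -> S B ->
  mu B = 0 -> subset A B -> S A /\ mu A = 0.
Proof. intros Hps HB HB0 Hsub. pose proof Hps as [Hs [_ Hc]].
  assert (HA : S A) by (eapply Hc; eauto). split; auto.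
  pose proof (mu_mono S mu A B Hps HA HB Hsub). pose proof (mu_pos S mu A Hps HA). lra. Qed.

Lemma pre_iter {M} S (mu : set M -> R) (f : M -> M) :
  (forall A, S A -> S (preimage f A) /\ mu (preimage f A) = mu A) ->
  forall k A, S A -> S (preimage (iterT k f) A) /\ mu (preimage (iterT k f) A) = mu A.
Proof. intros Hf k. induction k; intros A HA.
  - split; [exact HA | reflexivity].
  - change (preimage (iterT (Datatypes.S k) f) A) with (preimage (iterT k f) (preimage f A)).
    destruct (Hf A HA) as [H1 H2]. destruct (IHk _ H1) as [H3 H4]. split; auto. congruence. Qed.

Lemma iterT_S' {M} (f : M -> M) k x : iterT (S k) f x = iterT k f (f x).
Proof. revert x; induction k; intro x; auto. change (f (iterT (S k) f x) = f (iterT k f (f x))).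
  rewrite IHk; auto. Qed.

Lemma iterT_inv {M} (f g : M -> M) : (forall y, f (g y) = y) ->
  forall k x, iterT k f (iterT k g x) = x.
Proof. intros H k; induction k; intro x; auto.
  rewrite iterT_S'. change (iterT k f (f (g (iterT k g x))) = x). rewrite H; auto. Qed.

Lemma iterT_add {M} (f : M -> M) p q x : iterT (p + q) f x = iterT p f (iterT q f x).
Proof. induction p; simpl; auto. rewrite IHp; auto. Qed.

Lemma Tpow_succ {M} (T Tinv : M -> M) : (forall y, T (Tinv y) = y) ->
  forall t x, Tpow T Tinv (t + 1) x = T (Tpow T Tinv t x).
Proof.
  intros HTT t x. destruct t as [|p|p].
  - reflexivity.
  - replace (Z.pos p + 1)%Z with (Z.pos (Pos.succ p)) by lia.
    cbn [Tpow]. rewrite Pos2Nat.inj_succ. reflexivity.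
  - destruct (Pos.succ_pred_or p) as [->|Hp].
    + simpl. rewrite HTT. reflexivity.
    + rewrite <- Hp. generalize (Pos.pred p); intro q.
      replace (Z.neg (Pos.succ q) + 1)%Z with (Z.neg q) by lia.
      cbn [Tpow]. rewrite Pos2Nat.inj_succ. cbn [iterT]. rewrite HTT. reflexivity.
Qed.

Lemma pigeon : forall n (g : nat -> nat), (forall k, (k <= n)%nat -> (g k < n)%nat) ->
  exists a b, (a < b)%nat /\ (b <= n)%nat /\ g a = g b.
Proof.
  induction n; intros g Hg.
  - specialize (Hg 0%nat (le_n 0)). lia.
  - destruct (classic (exists a, (a < S n)%nat /\ g a = g (S n))) as [[a [Ha E]]|Hno].
    + exists a, (S n). repeat split; auto.
    + set (g' := fun k => if Nat.ltb (g k) (g (S n)) then g k else (g k - 1)%nat).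
      destruct (IHn g') as [a [b [Hab [Hb E]]]].
      * intros k Hk. unfold g'. assert (g k < S n)%nat by (apply Hg; lia).
        assert (g (S n) < S n)%nat by (apply Hg; lia).
        assert (g k <> g (S n)) by (intro; apply Hno; exists k; split; [lia|auto]).
        destruct (Nat.ltb_spec (g k) (g (S n))); lia.
      * exists a, b. repeat split; try lia. unfold g' in E.
        assert (g a <> g (S n)) by (intro; apply Hno; exists a; split; [lia|auto]).
        assert (g b <> g (S n)) by (intro; apply Hno; exists b; split; [lia|auto]).
        destruct (Nat.ltb_spec (g a) (g (S n))); destruct (Nat.ltb_spec (g b) (g (S n))); lia.
Qed.

Definition lvl {M O} (Phi : M -> O) (a : O) : set M := fun m => Phi m = a.

Theorem proposition1 (M : Type) (S : set M -> Prop) (mu : set M -> R)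
  (T Tinv : M -> M)
  (Hps : probability_space S mu)
  (HT : bimeasurable_bijection S T Tinv)
  (Hmp : measure_preserving S mu T)
  (Herg : ergodic S mu T)
  (Hnoper : ~ exists (k : nat) (C : set M),
      le 1 k /\ S C /\ 0 < mu C /\ mu C < 1 /\
      mu (symdiff (image (iterT k T) C) C) = 0)
  (O : Type) (Phi : M -> O) (n : nat) (o : nat -> O)
  (HPhi : nontrivial_finite_observation S mu Phi n o) :
  exists i, lt i n /\
    forall j, lt j n -> forall t : Z, trans_prob mu T Tinv Phi t (o i) (o j) < 1.
Proof.
  pose proof Hps as [Hs [[Hpos [H0 [H1 _]]] Hcomp]].
  destruct HT as [HTinvT [HTTinv [HmT HmTinv]]].
  destruct HPhi as [Hn2 [Hinj [Hcov Hal]]].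
  assert (Hal' : forall i, (i < n)%nat -> S (lvl Phi (o i)) /\ 0 < mu (lvl Phi (o i))) by exact Hal.
  clear Hal.
  assert (PT : forall A, S A -> S (preimage T A) /\ mu (preimage T A) = mu A).
  { intros A HA. split; auto. rewrite <- (Hmp (preimage T A)) by auto. f_equal.
    apply set_ext; intro x; unfold image, preimage; split.
    - intros [y [Hy <-]]; auto.
    - intro Hx. exists (Tinv x). rewrite HTTinv. auto. }
  assert (PTi : forall A, S A -> S (preimage Tinv A) /\ mu (preimage Tinv A) = mu A).
  { intros A HA. split; auto. rewrite <- (Hmp A) by auto. f_equal.
    apply set_ext; intro x; unfold image, preimage; split.
    - intro Hx. exists (Tinv x). rewrite HTTinv. auto.
    - intros [y [Hy <-]]. rewrite HTinvT. auto. }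
  assert (PTk := pre_iter S mu T PT).
  assert (PTik := pre_iter S mu Tinv PTi).
  assert (Ppow : forall t A, S A -> S (preimage (Tpow T Tinv t) A) /\ mu (preimage (Tpow T Tinv t) A) = mu A).
  { intros t A HA. destruct t as [|p|p]; cbn [Tpow].
    - split; [exact HA | reflexivity].
    - apply PTk; auto.
    - apply PTik; auto. }
  apply NNPP; intro Hneg.
  assert (Hstep : forall i, (i < n)%nat -> exists j, (j < n)%nat /\
            mu (setD (lvl Phi (o i)) (preimage T (lvl Phi (o j)))) = 0).
  { intros i Hi.
    assert (Hn1 : ~ (forall j, (j < n)%nat -> forall t, trans_prob mu T Tinv Phi t (o i) (o j) < 1))
      by (intro H; apply Hneg; exists i; auto).
    apply not_all_ex_not in Hn1. destruct Hn1 as [j Hj]. apply imply_to_and in Hj.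
    destruct Hj as [Hjn Hj]. apply not_all_ex_not in Hj. destruct Hj as [t Ht].
    apply Rnot_lt_le in Ht. exists j; split; auto.
    unfold trans_prob in Ht.
    assert (EN : (fun m => Phi (Tpow T Tinv t m) = o i /\ Phi (Tpow T Tinv (t + 1) m) = o j)
       = preimage (Tpow T Tinv t) (setI (lvl Phi (o i)) (preimage T (lvl Phi (o j))))).
    { apply set_ext; intro m. unfold preimage, setI, lvl. rewrite (Tpow_succ T Tinv HTTinv). tauto. }
    rewrite EN in Ht.
    change (fun m => Phi (Tpow T Tinv t m) = o i) with (preimage (Tpow T Tinv t) (lvl Phi (o i))) in Ht.
    destruct (Hal' i Hi) as [HSi Hpi]. destruct (Hal' j Hjn) as [HSj _].
    assert (HX : S (setI (lvl Phi (o i)) (preimage T (lvl Phi (o j))))).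
    { apply S_setI; auto. }
    rewrite (proj2 (Ppow t _ HX)), (proj2 (Ppow t _ HSi)) in Ht.
    set (d := mu (lvl Phi (o i))) in *. set (X := mu (setI _ _)) in Ht.
    assert (HXd : d <= X).
    { unfold Rdiv in Ht. apply (Rmult_le_compat_r d) in Ht; [|lra].
      rewrite Rmult_assoc, Rinv_l, Rmult_1_r in Ht by lra. lra. }
    pose proof (mu_split S mu (lvl Phi (o i)) (preimage T (lvl Phi (o j))) Hps HSi (proj1 (PT _ HSj))).
    pose proof (mu_pos S mu _ Hps (S_setD S _ _ Hs HSi (proj1 (PT _ HSj)))).
    fold d in H. fold X in H. lra. }
  set (f := fun i => epsilon (inhabits 0%nat) (fun j => (j < n)%nat /\
            mu (setD (lvl Phi (o i)) (preimage T (lvl Phi (o j)))) = 0)).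
  assert (Hf : forall i, (i < n)%nat -> (f i < n)%nat /\
            mu (setD (lvl Phi (o i)) (preimage T (lvl Phi (o (f i))))) = 0).
  { intros i Hi. unfold f. apply epsilon_spec. auto. }
  assert (Hit : forall k i, (i < n)%nat -> (iterT k f i < n)%nat).
  { induction k; intros i Hi; simpl; auto. apply Hf; auto. }
  destruct (pigeon n (fun k => iterT k f 0%nat)) as [a [b [Hab [Hb E]]]].
  { intros k _. apply Hit. lia. }
  set (c := iterT a f 0%nat) in *.
  set (K := (b - a)%nat).
  assert (Hc : (c < n)%nat) by (apply Hit; lia).
  assert (HcK : iterT K f c = c).
  { unfold c, K. rewrite <- iterT_add. replace (b - a + a)%nat with b by lia. auto. }
  assert (Hchain : forall k i, (i < n)%nat ->
     S (setD (lvl Phi (o i)) (preimage (iterT k T) (lvl Phi (o (iterT k f i))))) /\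
     mu (setD (lvl Phi (o i)) (preimage (iterT k T) (lvl Phi (o (iterT k f i))))) = 0).
  { induction k; intros i Hi.
    - apply (null_subset S mu _ set0 Hps (S_set0 S Hs) H0).
      intros x [Hx Hnx]. apply Hnx. exact Hx.
    - destruct (IHk i Hi) as [HS1 Hm1].
      assert (Hk := Hit k i Hi).
      destruct (Hf _ Hk) as [Hfk Hm2].
      assert (HS2 : S (setD (lvl Phi (o (iterT k f i))) (preimage T (lvl Phi (o (f (iterT k f i))))))).
      { apply S_setD; auto. apply Hal'; auto. apply PT, Hal'; auto. }
      destruct (PTk k _ HS2) as [HS3 Hm3].
      destruct (null_union S mu _ _ Hps HS1 HS3 Hm1 ltac:(congruence)) as [HSU HmU].
      apply (null_subset S mu _ _ Hps HSU HmU).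
      intros x [Hx Hnx]. unfold setU.
      destruct (classic (preimage (iterT k T) (lvl Phi (o (iterT k f i))) x)) as [Hp|Hp].
      + right. split; auto.
      + left. split; auto. }
  destruct (Hchain K c Hc) as [HD1 HmD1]. rewrite HcK in HD1, HmD1.
  set (C := lvl Phi (o c)) in *.
  destruct (Hal' c Hc) as [HSC HpC].
  apply Hnoper. exists K, C.
  assert (HPC := PTk K C HSC). destruct HPC as [HSP HmP].
  split; [unfold K; lia|]. split; [auto|]. split; [auto|]. split.
  -
    set (c' := match c with 0%nat => 1%nat | _ => 0%nat end).
    assert (Hc' : (c' < n)%nat /\ c' <> c) by (unfold c'; destruct c; split; lia).
    destruct Hc' as [Hc'n Hc'c].
    destruct (Hal' c' Hc'n) as [HS' Hp'].
    pose proof (mu_split S mu setT C Hps (proj1 Hs) HSC) as Hspl.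
    replace (setI setT C) with C in Hspl by (apply set_ext; unfold setI, setT; tauto).
    assert (mu (lvl Phi (o c')) <= mu (setD setT C)).
    { apply (mu_mono S); auto. apply S_setD; auto. apply Hs.
      intros x Hx. split; [exact I|]. intro HxC. unfold C, lvl in *.
      apply Hc'c. apply Hinj; auto. congruence. }
    lra.
  - assert (HD2 : S (setD (preimage (iterT K T) C) C) /\ mu (setD (preimage (iterT K T) C) C) = 0).
    { split. apply S_setD; auto.
      pose proof (mu_split S mu C (preimage (iterT K T) C) Hps HSC HSP).
      pose proof (mu_split S mu (preimage (iterT K T) C) C Hps HSP HSC).
      replace (setI (preimage (iterT K T) C) C) with (setI C (preimage (iterT K T) C)) in H2
        by (apply set_ext; unfold setI; tauto).
      lra. }
    destruct HD2 as [HSD2 HmD2].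
    destruct (PTik K _ HD1) as [HSE1 HmE1].
    destruct (PTik K _ HSD2) as [HSE2 HmE2].
    destruct (null_subset S mu (setD (image (iterT K T) C) C) _ Hps HSE1 ltac:(congruence)) as [HS1 Hm1].
    { intros x [[y [Hy Hyx]] Hnx]. unfold preimage, setD.
      rewrite <- Hyx. rewrite (iterT_inv Tinv T HTinvT). split; auto. congruence. }
    destruct (null_subset S mu (setD C (image (iterT K T) C)) _ Hps HSE2 ltac:(congruence)) as [HS2 Hm2].
    { intros x [Hx Hnx]. unfold preimage, setD. rewrite (iterT_inv T Tinv HTTinv). split; auto.
      intro Hy. apply Hnx. exists (iterT K Tinv x). split; auto. apply iterT_inv; auto. }
    unfold symdiff. apply (null_union S mu _ _ Hps HS1 HS2 Hm1 Hm2).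
Qed.
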